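(* Let $\mathbf{B}$ be a unital ring. In the Labyrinth Category the following two equations hold, for every multi-set $P$ of passages, elements $x\in X$, $y\in Y$ (denoted $\ast\to\ast$ below) and $a_1,\dots,a_n\in\mathbf{B}$ (whenever the displayed multi-sets are mazes): $$\Big[P\cup\{x\xrightarrow{\sum_{i=1}^na_i}y\}\Big]=\sum_{\emptyset\ne I\subseteq[n]}\Big[P\cup\bigcup_{i\in I}\{x\xrightarrow{a_i}y\}\Big],$$ $$\Big[P\cup\bigcup_{i=1}^n\{x\xrightarrow{a_i}y\}\Big]=\sum_{I\subseteq[n]}(-1)^{n-|I|}\Big[P\cup\{x\xrightarrow{\sum_{i\in I}a_i}y\}\Big].$$
   Context: $[n]=\{1,\dots,n\}$; $\cup$ denotes multi-set sum. A passage $x\xrightarrow{a}y$ from an element of a finite set $X$ to an element of a finite set $Y$ carries a label $a\in\mathbf{B}$. A maze $X\to Y$ is a finite multi-set of passages such that every element of $X$ is a source and every element of $Y$ a target of some passage. In the Labyrinth Category $\mathfrak{Laby}$, the morphism group $\mathfrak{Laby}(X,Y)$ is generated by mazes $X\to Y$ modulo the relations (I) $P\cup\{x\xrightarrow0y\}=0$ and (II) $P\cup\{x\xrightarrow{a+b}y\}=P\cup\{x\xrightarrow ay\}+P\cup\{x\xrightarrow by\}+P\cup\{x\xrightarrow ay,x\xrightarrow by\}$, for all multi-sets of passages $P$ and $a,b\in\mathbf{B}$. A term $[P\cup\{x\xrightarrow{0}y\}]$ arising from $I=\emptyset$ in the second equation is $0$ by (I). *)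

(* Defs.v *)
From HB Require Import structures.
From mathcomp Require Import all_boot all_order all_algebra.
From mathcomp Require Import finmap multiset.
From mathcomp Require Import freeg.

Set Implicit Arguments.
Unset Strict Implicit.
Unset Printing Implicit Defensive.

Import GRing.Theory.
Local Open Scope ring_scope.
Local Open Scope mset_scope.

Section Laby.
Variables (B : pzRingType) (X Y : finType).

Definition passage : choiceType := ((X * B) * Y)%type.

Definition pass (x : X) (a : B) (y : Y) : passage := ((x, a), y).

Definition src (p : passage) : X := p.1.1.
Definition lbl (p : passage) : B := p.1.2.
Definition tgt (p : passage) : Y := p.2.

Definition passages := {mset passage}.

Definition is_maze (P : passages) : Prop :=
  (forall x : X, exists2 p, p \in P & src p = x) /\
  (forall y : Y, exists2 p, p \in P & tgt p = y).

Definition formal := {freeg passages}.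

Definition lab (P : passages) : formal := << P >>.

(* The subgroup generated by relations (I) and (II) (instances in which
   the multi-sets involved are mazes; note all multi-sets in one instance
   have the same sources and targets, so they are all mazes or none is). *)
Inductive laby_rel : formal -> Prop :=
| laby_rel0 : laby_rel 0
| laby_relD z1 z2 : laby_rel z1 -> laby_rel z2 -> laby_rel (z1 + z2)
| laby_relN z : laby_rel z -> laby_rel (- z)
| laby_relI (P : passages) x y :
    is_maze (pass x 0 y +` P) -> laby_rel (lab (pass x 0 y +` P))
| laby_relII (P : passages) x y (a b : B) :
    is_maze (pass x (a + b) y +` P) ->
    laby_rel (lab (pass x (a + b) y +` P)
              - lab (pass x a y +` P)
              - lab (pass x b y +` P)
              - lab (pass x a y +` (pass x b y +` P))).

Definition laby_eq (z1 z2 : formal) : Prop := laby_rel (z1 - z2).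

Definition bigpass n (x : X) (y : Y) (a : 'I_n -> B) (I : {set 'I_n}) : passages :=
  \big[@msetD _/mset0]_(i in I) [mset pass x (a i) y].

End Laby.

(* Main.v *)
Require Import Defs.
From HB Require Import structures.
From mathcomp Require Import all_boot all_order all_algebra.
From mathcomp Require Import finmap multiset.
From mathcomp Require Import freeg.
Import GRing.Theory.
Local Open Scope ring_scope.
Local Open Scope mset_scope.

HB.instance Definition _ (K : choiceType) :=
  Monoid.isComLaw.Build {mset K} mset0 (@msetD K) (@msetDA K) (@msetDC K) (@mset0D K).

Lemma sum_split (V : nmodType) n (F : {set 'I_n} -> V) (J : {set 'I_n}) j :
  j \notin J ->
  \sum_(I : {set 'I_n} | I \subset j |: J) F I =
  \sum_(I : {set 'I_n} | I \subset J) F I + \sum_(I : {set 'I_n} | I \subset J) F (j |: I).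
Proof.
move=> jJ; rewrite (bigID (fun I : {set 'I_n} => j \in I)) /= addrC; congr (_ + _).
  apply: eq_bigl => I; apply/idP/idP.
    case/andP=> /subsetP sI jI; apply/subsetP => z zI.
    move: (sI z zI); rewrite in_setU1; case/orP => // /eqP ez.
    by rewrite -ez zI in jI.
  move=> sIJ; rewrite (subset_trans sIJ (subsetU1 _ _)) /=.
  by apply/negP => /(subsetP sIJ); rewrite (negbTE jJ).
rewrite (reindex_onto (fun I : {set 'I_n} => j |: I) (fun I : {set 'I_n} => I :\ j)) /=; last first.
  by move=> I /andP[_ jI]; rewrite setD1K.
apply: eq_bigl => I; rewrite setU11 andbT; apply/idP/idP.
  case/andP=> /subsetP sI /eqP eI; apply/subsetP => z zI.
  have: z \in j |: J by apply: sI; rewrite in_setU1 zI orbT.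
  rewrite in_setU1; case/orP => // /eqP ez.
  move: zI; rewrite -eI ez in_setD1; by rewrite eqxx.
move=> sIJ; have jI : j \notin I.
  by apply/negP => /(subsetP sIJ); rewrite (negbTE jJ).
by rewrite setU1K // eqxx andbT setUS.
Qed.

Section S.
Variables (B : pzRingType) (X Y : finType).

Lemma rel_sum (I : Type) (r : seq I) (p : pred I) (F : I -> formal B X Y) :
  (forall i, p i -> laby_rel (F i)) -> laby_rel (\sum_(i <- r | p i) F i).
Proof. by move=> H; apply: big_ind => //; [exact: laby_rel0| exact: laby_relD]. Qed.

Lemma rel_natmul (z : formal B X Y) k : laby_rel z -> laby_rel (z *+ k).
Proof. by move=> H; elim: k => [|k IH]; [rewrite mulr0n; exact: laby_rel0| rewrite mulrS; exact: laby_relD]. Qed.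

Lemma rel_intmul (z : formal B X Y) (k : int) : laby_rel z -> laby_rel (z *~ k).
Proof.
move=> H; case: k => k; first exact: rel_natmul.
by rewrite NegzE mulrNz; apply: laby_relN; exact: rel_natmul.
Qed.

Lemma rel_sub (z1 z2 : formal B X Y) : laby_rel z1 -> laby_rel z2 -> laby_rel (z1 - z2).
Proof. by move=> H1 H2; apply: laby_relD => //; exact: laby_relN. Qed.

Lemma maze_ext (P Q : passages B X Y) x y c c' :
  is_maze (pass x c y +` P) -> is_maze (pass x c' y +` (Q `+` P)).
Proof.
case=> [Hx Hy]; split.
  move=> z; case: (Hx z) => p /msetDP [pP|pP] <-.
    move: pP; rewrite in_mset1 => /eqP ->; exists (pass x c' y) => //.
    by apply/msetDP; left; rewrite in_mset1.
  by exists p => //; apply/msetDP; right; apply/msetDP; right.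
move=> z; case: (Hy z) => p /msetDP [pP|pP] <-.
  move: pP; rewrite in_mset1 => /eqP ->; exists (pass x c' y) => //.
  by apply/msetDP; left; rewrite in_mset1.
by exists p => //; apply/msetDP; right; apply/msetDP; right.
Qed.

Lemma maze_ch (P : passages B X Y) x y c c' :
  is_maze (pass x c y +` P) -> is_maze (pass x c' y +` P).
Proof. by move=> H; have := @maze_ext P mset0 x y c c' H; rewrite mset0D. Qed.

End S.

Lemma alg1 (V : zmodType) (L P P2 S S2 T1 T2 : V) : L - (T1 + T2 - P) = (L - P2 - S - S2) + (S - (T1 - P)) + (S2 - (T2 - P2)).
Proof.
rewrite [L - P2 - S - S2]addrAC subrKA [L - P2 - S2 - _]addrAC subrKA.
rewrite -!addrA; congr (L + _). rewrite [- (T2 - P2)]opprB [RHS]addrCA addKr opprD opprB.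
by rewrite opprB addrCA addrA.
Qed.

Section P1.
Variables (B : pzRingType) (X Y : finType) (x : X) (y : Y) (n : nat) (a : 'I_n -> B).

Lemma bigpass0 : bigpass x y a set0 = mset0.
Proof. by rewrite /bigpass big_set0. Qed.

Lemma bigpassU (j : 'I_n) (I : {set 'I_n}) : j \notin I -> bigpass x y a (j |: I) = pass x (a j) y +` bigpass x y a I.
Proof. by move=> jI; rewrite /bigpass big_setU1. Qed.

Lemma notin_sub (j : 'I_n) (I J : {set 'I_n}) : j \notin J -> I \subset J -> j \notin I.
Proof. by move=> jJ sIJ; apply/negP => /(subsetP sIJ); rewrite (negbTE jJ). Qed.

Lemma part1 k (J : {set 'I_n}) : (#|J| < k)%N -> forall P : passages B X Y,
  is_maze (pass x 0 y +` P) ->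
  laby_rel (lab (pass x (\sum_(i in J) a i) y +` P)
     - (\sum_(I : {set 'I_n} | I \subset J) lab (bigpass x y a I `+` P) - lab P)).
Proof.
elim: k J => // k IH J hJ P HP.
case: (set_0Vmem J) => [-> | [j jJ]].
  rewrite big_set0 (eq_bigl (pred1 set0)) => [|I]; last by rewrite subset0.
  rewrite big_pred1_eq bigpass0 mset0D subrr subr0; exact: laby_relI.
have jJ' : j \notin J :\ j by rewrite setD11.
have hJ' : (#|J :\ j| < k)%N.
  by move: hJ; rewrite (cardsD1 j J) jJ add1n ltnS.
rewrite -(setD1K jJ); move: (J :\ j) jJ' hJ' => J' jJ' hJ'.
rewrite big_setU1 //= sum_split //.
have HP2 : is_maze (pass x 0 y +` ([mset pass x (a j) y] `+` P)) by exact: maze_ext HP.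
have IH1 := IH J' hJ' P HP.
have IH2 := IH J' hJ' _ HP2.
have R := @laby_relII B X Y P x y (a j) (\sum_(i in J') a i) (@maze_ch B X Y P x y 0 _ HP).
have -> : \sum_(I : {set 'I_n} | I \subset J') lab (bigpass x y a (j |: I) `+` P)
  = \sum_(I : {set 'I_n} | I \subset J') lab (bigpass x y a I `+` (pass x (a j) y +` P)).
  apply: eq_bigr => I sI; rewrite bigpassU; last exact: notin_sub jJ' sI.
  by rewrite -msetDA msetDCA.
rewrite msetDCA in R.
rewrite (@alg1 _ _ _ (lab (pass x (a j) y +` P)) (lab (pass x (\sum_(i in J') a i) y +` P))
  (lab (pass x (\sum_(i in J') a i) y +` (pass x (a j) y +` P))) _ _).
by apply: laby_relD; [apply: laby_relD|].
Qed.

End P1.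

Lemma alg2 (V : zmodType) (L R C : V) : L - (R + C + 0) = (L - C) - R.
Proof. by rewrite addr0 opprD addrA addrAC. Qed.

Lemma sgn_sum n (J : {set 'I_n}) m : J != set0 ->
  \sum_(I : {set 'I_n} | I \subset J) ((-1) ^+ (m + #|I|) : int) = 0.
Proof.
case: (set_0Vmem J) => [-> | [j jJ]]; first by rewrite eqxx.
move=> _; rewrite -(setD1K jJ) sum_split ?setD11 // -big_split /=.
apply: big1 => I sI; rewrite cardsU1.
have -> : j \notin I.
  by apply/negP => /(subsetP sI); rewrite setD11.
by rewrite add1n addnS exprS mulN1r addrN.
Qed.

Lemma alg3 (V : zmodType) (A P2 S C : V) : -S + A = A - P2 - S - C + C + P2.
Proof. by rewrite subrK addrAC subrK addrC. Qed.

Section P2.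
Variables (B : pzRingType) (X Y : finType) (x : X) (y : Y) (n : nat) (a : 'I_n -> B).

Lemma part2 k (J : {set 'I_n}) : (#|J| < k)%N -> J != set0 -> forall P : passages B X Y,
  is_maze (pass x 0 y +` P) ->
  laby_rel (lab (bigpass x y a J `+` P)
     - \sum_(I : {set 'I_n} | I \subset J)
          lab (pass x (\sum_(i in I) a i) y +` P) *~ ((-1) ^+ (#|J| + #|I|))).
Proof.
elim: k J => // k IH J hJ JN0 P HP.
case: (set_0Vmem J) JN0 => [-> | [j jJ]]; first by rewrite eqxx.
move=> _.
have jJ' : j \notin J :\ j by rewrite setD11.
have hJ' : (#|J :\ j| < k)%N.
  by move: hJ; rewrite (cardsD1 j J) jJ add1n ltnS.
rewrite -(setD1K jJ); move: (J :\ j) jJ' hJ' => J' jJ' hJ'.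
rewrite sum_split // cardsU1 jJ' add1n bigpassU //.
case: (set_0Vmem J') => [E | [j' j'J']].
  subst J'.
  rewrite (eq_bigl (pred1 set0)) => [|I]; last by rewrite subset0.
  rewrite big_pred1_eq (eq_bigl (pred1 set0)) => [|I]; last by rewrite subset0.
  rewrite big_pred1_eq setU0 big_set0 big_set1 cards0 cards1 bigpass0 msetD0.
  rewrite addn0 expr1 mulrN1z mulr1z opprD opprK subrKC.
  exact: laby_relI.
have J'N0 : J' != set0 by apply/set0Pn; exists j'.
have HP2 : is_maze (pass x 0 y +` ([mset pass x (a j) y] `+` P)) by exact: maze_ext HP.
have IH2 := IH J' hJ' J'N0 _ HP2.
set s := fun I : {set 'I_n} => ((-1) ^+ (#|J'| + #|I|) : int).
set P2 := [mset pass x (a j) y] `+` P.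
set C := fun I : {set 'I_n} => lab (pass x (\sum_(i in I) a i) y +` P2).
set R := fun I : {set 'I_n} =>
  lab (pass x (a j + \sum_(i in I) a i) y +` P) - lab P2
  - lab (pass x (\sum_(i in I) a i) y +` P) - C I.
have HR : forall I, laby_rel (R I).
  move=> I; rewrite /R /C /P2 -msetDCA.
  exact: (@laby_relII B X Y P x y (a j) _ (@maze_ch B X Y P x y 0 _ HP)).
have E : \sum_(I : {set 'I_n} | I \subset J')
      lab (pass x (\sum_(i in I) a i) y +` P) *~ (-1) ^+ (#|J'|.+1 + #|I|) +
    \sum_(I : {set 'I_n} | I \subset J')
      lab (pass x (\sum_(i in j |: I) a i) y +` P) *~ (-1) ^+ (#|J'|.+1 + #|j |: I|)
  = \sum_(I : {set 'I_n} | I \subset J') R I *~ s I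
    + \sum_(I : {set 'I_n} | I \subset J') C I *~ s I
    + lab P2 *~ \sum_(I : {set 'I_n} | I \subset J') s I.
  rewrite mulrz_sumr -!big_split /=; apply: eq_bigr => I sI.
  have jI : j \notin I := @notin_sub _ _ _ _ jJ' sI.
  rewrite big_setU1 //= cardsU1 jI add1n addnS !addSn !exprS !mulN1r opprK mulrNz.
  rewrite -!mulrzDl -mulNrz -mulrzDl; congr (_ *~ _).
  by rewrite /R /C -alg3.
rewrite E sgn_sum // mulr0z alg2.
apply: rel_sub; last first.
  by apply: rel_sum => I _; apply: rel_intmul.
move: IH2; rewrite /C /s /P2 -msetDA msetDCA.
by [].
Qed.
End P2.

Lemma sgn_conv (n c : nat) : (c <= n)%N -> ((-1) ^+ (n + c) : int) = (-1) ^+ (n - c).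
Proof.
move=> hc; rewrite -{1}(subnK hc) -addnA addnn -mul2n exprD exprM sqrrN !expr1n mulr1.
done.
Qed.

Theorem mainTheorem15 (B : pzRingType) (X Y : finType) (P : passages B X Y)
  (x : X) (y : Y) (n : nat) (a : 'I_n -> B) :
  (0 < n)%N ->
  is_maze (pass x (\sum_(i < n) a i) y +` P) ->
  laby_eq (lab (pass x (\sum_(i < n) a i) y +` P))
          (\sum_(I : {set 'I_n} | I != set0) lab (bigpass x y a I `+` P))
  /\
  laby_eq (lab (bigpass x y a [set: 'I_n] `+` P))
          (\sum_(I : {set 'I_n})
             (lab (pass x (\sum_(i in I) a i) y +` P)) *~ ((-1) ^+ (n - #|I|))).
Proof.
move=> n0 HM.
have HP : is_maze (pass x 0 y +` P) := @maze_ch B X Y P x y _ 0 HM.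
have EA : \sum_(i in [set: 'I_n]) a i = \sum_(i < n) a i.
  by apply: eq_bigl => i; rewrite in_setT.
split.
  have := @part1 B X Y x y n a _ [set: 'I_n] (ltnSn _) P HP.
  rewrite EA (bigD1 set0) ?sub0set //= bigpass0 mset0D addrC addrK /laby_eq.
  congr laby_rel; congr (_ - _); apply: eq_bigl => I; by rewrite subsetT.
have NZ : [set: 'I_n] != set0 by apply/set0Pn; exists (Ordinal n0); rewrite in_setT.
have := @part2 B X Y x y n a _ [set: 'I_n] (ltnSn _) NZ P HP.
rewrite /laby_eq cardsT card_ord; congr laby_rel; congr (_ - _).
rewrite (eq_bigl xpredT) => [|I]; last by rewrite subsetT.
apply: eq_bigr => I _; rewrite sgn_conv //.
by rewrite -[X in (_ <= X)%N]card_ord max_card.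
Qed.
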